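(* Consider the corrupted Lipschitz contextual search problem with pricing loss described in the context, and assume the corruption budget $C\ge 1$ is known to the learner. If the learner runs Algorithm 3 (described in the context) with $\eta_0=T^{-1/(d+1)}$ and $\tau_0=\sqrt{T/C}$, then for every $L$-Lipschitz $f$, context sequence and adaptive corruption strategy with at most $C$ corrupted rounds, the total pricing loss is at most \[ L\cdot\widetilde{O}\big(T^{d/(d+1)}+\sqrt{TC}\big), \] where $\widetilde O$ hides logarithmic factors in $T$.
   Context: Problem. Fix $L>0$, $d\ge 1$, horizon $T\ge 2$. An adversary fixes an unknown $f:[0,1]^d\to[0,L]$ with $|f(x)-f(y)|\le L\|x-y\|_\infty$. In each round $t=1,\dots,T$: the adversary chooses $x_t\in[0,1]^d$; the learner observes $x_t$ and posts a guess $q_t$; the adversary observes $q_t$ and sends $\sigma_t\in\{0,1\}$. With $\sigma(u)=1$ if $u>0$, $0$ if $u\le 0$: in uncorrupted rounds $\sigma_t=\sigma(q_t-f(x_t))$, in corrupted rounds $\sigma_t=1-\sigma(q_t-f(x_t))$; the adversary chooses adaptively (after seeing $q_t$) which rounds to corrupt, with at most $C$ corrupted rounds. The pricing loss of round $t$ is $f(x_t)-q_t\cdot\mathbb{1}[q_t\le f(x_t)]$. $\mathtt{len}$ denotes length of an interval and side length of a hypercube. Subroutine $\mathtt{MidpointQuery}(I,Y)$, $Y=[a,b]$: guess $q=(a+b)/2$; if $\sigma_t=1$ return $Y\cap[0,q+L\,\mathtt{len}(I)]$, if $\sigma_t=0$ return $Y\cap[q-L\,\mathtt{len}(I),\infty)$.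 Algorithm 3 (parameters $\eta_0$, $\tau_0$). Uniformly partition $[0,1]^d$ into hypercubes of side length $\Theta(\eta_0)$; each hypercube $I_j$ has range $Y_j$ (initially $[0,L]$) and counter $c_j$ (initially $0$). In round $t$, with $I_j\ni x_t$: if $\mathtt{len}(Y_j)<10L\eta_0$, set $c_j:=c_j+1$; if $c_j>\tau_0$ guess $\max(Y_j)$ (checking round) and set $c_j:=0$, else guess $\min(Y_j)$ (pricing round); if a checking round receives $\sigma_t=0$ or a pricing round receives $\sigma_t=1$ (the learner is ''surprised''), set $Y_j:=[0,L]$, $c_j:=0$. Otherwise (searching round) set $Y_j:=\mathtt{MidpointQuery}(I_j,Y_j)$. *)

(* Defs.v *)
From Stdlib Require Import Reals Lra Lia List ZArith.
Open Scope R_scope.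

(** Points of [0,1]^d are functions nat -> R; only coordinates i < d matter. *)
Definition point := nat -> R.

Definition in_unit_cube (d : nat) (x : point) : Prop :=
  forall i, (i < d)%nat -> 0 <= x i <= 1.

Definition dist_inf (d : nat) (x y : point) : R :=
  fold_right Rmax 0 (map (fun i => Rabs (x i - y i)) (seq 0 d)).

Definition admissible_f (d : nat) (L : R) (f : point -> R) : Prop :=
  (forall x, in_unit_cube d x -> 0 <= f x <= L) /\
  (forall x y, in_unit_cube d x -> in_unit_cube d y ->
     Rabs (f x - f y) <= L * dist_inf d x y).

Definition sgn (u : R) : bool := if Rlt_dec 0 u then true else false.

Definition pricing_loss (v q : R) : R := v - (if Rle_dec q v then q else 0).

Definition cell (N : nat) (r : R) : nat :=
  Nat.min (N - 1) (Z.to_nat (Int_part (r * INR N))).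

Definition cube_index (d N : nat) (x : point) : list nat :=
  map (fun i => cell N (x i)) (seq 0 d).

(** Per-hypercube state: range Y_j = [lo, hi] and counter c_j. *)
Record cstate := mkC { lo : R; hi : R; cnt : nat }.

(** One round of Algorithm 3 on the hypercube containing x_t, with range
    width parameter L, eta0, tau0 and cube side length w. *)
Definition alg3_round (L eta0 tau0 w : R) (s : cstate) : R * (bool -> cstate) :=
  let a := lo s in
  let b := hi s in
  if Rlt_dec (b - a) (10 * L * eta0) then
    let c := S (cnt s) in
    if Rlt_dec tau0 (INR c) then
      (* checking round: guess max Y; surprised iff sigma = 0 *)
      (b, fun sg : bool => if sg then mkC a b 0 else mkC 0 L 0)
    else
      (* pricing round: guess min Y; surprised iff sigma = 1 *)
      (a, fun sg : bool => if sg then mkC 0 L 0 else mkC a b c)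
  else
    (* searching round: MidpointQuery(I_j, Y_j) *)
    let q := (a + b) / 2 in
    (q, fun sg : bool => if sg
                   then mkC (Rmax a 0) (Rmin b (q + L * w)) (cnt s)
                   else mkC (Rmax a (q - L * w)) b (cnt s)).

Definition history := list (point * R * bool).

Record gstate := mkG {
  gcubes : list nat -> cstate;
  ghist : history;
  gncorr : nat;
  gloss : R
}.

(** The game: the adversary (adaptive) picks x_t from the history, then,
    after seeing q_t, decides whether to corrupt round t. *)
Fixpoint run_game (d N : nat) (L eta0 tau0 : R) (f : point -> R)
    (advx : history -> point) (advc : history -> point -> R -> bool)
    (n : nat) : gstate :=
  match n with
  | O => mkG (fun _ => mkC 0 L 0) nil 0 0
  | S m =>
      let g := run_game d N L eta0 tau0 f advx advc m in
      let x := advx (ghist g) in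
      let j := cube_index d N x in
      let r := alg3_round L eta0 tau0 (/ INR N) (gcubes g j) in
      let q := fst r in
      let cor := advc (ghist g) x q in
      let sg := xorb (sgn (q - f x)) cor in
      mkG (fun j' => if list_eq_dec Nat.eq_dec j' j then snd r sg else gcubes g j')
          (ghist g ++ (x, q, sg) :: nil)
          (gncorr g + (if cor then 1 else 0))
          (gloss g + pricing_loss (f x) q)
  end.

Definition eta0_of (d T : nat) : R := Rpower (INR T) (- / INR (d + 1)).
Definition tau0_of (T C : nat) : R := sqrt (INR T / INR C).
(** Number of cells per side: side length 1/N = Theta(eta0). *)
Definition N_of (eta0 : R) : nat := Z.to_nat (up (/ eta0)).

(* Main.v *)
Require Import Defs.
From Stdlib Require Import Reals Lra Lia List ZArith ClassicalDescription Classical.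
Open Scope R_scope.

Lemma ln_le' : forall x y, 0 < x -> x <= y -> ln x <= ln y.
Proof.
  intros x y Hx Hxy. destruct (Req_dec x y) as [->|Hne]; [lra|].
  left; apply ln_increasing; lra.
Qed.

Lemma ln_nonpos : forall x, x <= 1 -> ln x <= 0.
Proof.
  intros x Hx. destruct (Rlt_dec 0 x) as [H|H].
  - rewrite <- ln_1; apply ln_le'; lra.
  - unfold ln; destruct (Rlt_dec 0 x); [contradiction|lra].
Qed.

Definition sumR (l : list R) : R := fold_right Rplus 0 l.

Lemma sumR_nonneg {A} (F : A -> R) l : (forall a, 0 <= F a) -> 0 <= sumR (map F l).
Proof. intros H; induction l; simpl; [lra|]. specialize (H a); lra. Qed.

Lemma sumR_le_const {A} (F : A -> R) l c : (forall a, F a <= c) ->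
  sumR (map F l) <= INR (length l) * c.
Proof.
  intros H; induction l; cbn -[INR]; [unfold sumR; simpl; lra|]. rewrite S_INR. specialize (H a); unfold sumR in *; lra.
Qed.

Lemma sumR_ext {A} (F G : A -> R) l : (forall a, In a l -> F a = G a) ->
  sumR (map F l) = sumR (map G l).
Proof. intros H; now rewrite (map_ext_in F G l H). Qed.

Lemma sum_update (G : list nat -> cstate -> R) (F : list nat -> cstate) (a : cstate) j l :
  NoDup l -> In j l ->
  sumR (map (fun j' => G j' (if list_eq_dec Nat.eq_dec j' j then a else F j')) l)
  = sumR (map (fun j' => G j' (F j')) l) - G j (F j) + G j a.
Proof.
  induction l as [|j0 l IH]; intros Hnd Hin; [destruct Hin|].
  apply NoDup_cons_iff in Hnd as [Hn0 Hnd].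
  simpl. destruct (list_eq_dec Nat.eq_dec j0 j) as [<-|Hne].
  - rewrite (sumR_ext _ (fun j' => G j' (F j'))).
    + lra.
    + intros a0 Ha0. destruct (list_eq_dec Nat.eq_dec a0 j0); [subst; contradiction|auto].
  - destruct Hin as [Heq|Hin]; [congruence|]. rewrite IH by auto. lra.
Qed.

Fixpoint all_idx (d N : nat) : list (list nat) :=
  match d with
  | O => nil :: nil
  | S d' => flat_map (fun i => map (cons i) (all_idx d' N)) (seq 0 N)
  end.

Lemma all_idx_in : forall d N (g : nat -> nat) a,
  (forall i, (g i < N)%nat) -> In (map g (seq a d)) (all_idx d N).
Proof.
  induction d; intros N g a Hg; simpl; [auto|].
  apply in_flat_map. exists (g a). split.
  - apply in_seq. specialize (Hg a). lia.
  - apply in_map. apply IHd; auto.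
Qed.

Lemma all_idx_nodup : forall d N, NoDup (all_idx d N).
Proof.
  induction d; intros N; simpl.
  - constructor; [simpl; tauto|constructor].
  - assert (HA := IHd N). revert HA. generalize (all_idx d N) as A. intros A HA.
    generalize 0%nat as st. induction N; intros st; simpl; [constructor|].
    apply NoDup_app.
    + apply NoDup_map_NoDup_ForallPairs; [intros x y _ _ H; congruence|auto].
    + apply IHN.
    + intros l Hl Hl2. apply in_map_iff in Hl as [l0 [<- _]].
      apply in_flat_map in Hl2 as [i [Hi Hi2]]. apply in_map_iff in Hi2 as [l1 [Heq _]].
      injection Heq; intros; subst. apply in_seq in Hi. lia.
Qed.

Lemma all_idx_length : forall d N, length (all_idx d N) = (N ^ d)%nat.
Proof.
  induction d; intros N; simpl; [auto|].
  assert (H : forall s, length (flat_map (fun i => map (cons i) (all_idx d N)) s)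
                = (length s * N ^ d)%nat).
  { induction s; simpl; auto. rewrite length_app, length_map, IHs, IHd. lia. }
  rewrite H, length_seq. lia.
Qed.

Lemma cell_lt : forall N r, (1 <= N)%nat -> (cell N r < N)%nat.
Proof. intros. unfold cell. lia. Qed.

Lemma cell_bounds : forall N r, (1 <= N)%nat -> 0 <= r <= 1 ->
  INR (cell N r) <= r * INR N <= INR (cell N r) + 1.
Proof.
  intros N r HN Hr. unfold cell.
  set (z := Int_part (r * INR N)).
  destruct (base_Int_part (r * INR N)) as [H1 H2]. fold z in H1, H2.
  assert (HNpos : 1 <= INR N) by (apply (le_INR 1); auto).
  assert (Hz : (0 <= z)%Z).
  { assert (-1 < IZR z) by nra. apply lt_IZR in H. lia. }
  assert (Hzn : INR (Z.to_nat z) = IZR z).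
  { rewrite INR_IZR_INZ, Z2Nat.id; auto. }
  destruct (Nat.le_gt_cases (Z.to_nat z) (N - 1)) as [Hle|Hgt].
  - rewrite Nat.min_r by auto. rewrite Hzn. lra.
  - rewrite Nat.min_l by lia. rewrite minus_INR by auto. simpl INR.
    assert (INR (N-1) <= INR (Z.to_nat z)) by (apply le_INR; lia).
    rewrite minus_INR in H by auto. simpl INR in H. nra.
Qed.

Lemma cell_close : forall N r r', (1 <= N)%nat -> 0 <= r <= 1 -> 0 <= r' <= 1 ->
  cell N r = cell N r' -> Rabs (r - r') <= / INR N.
Proof.
  intros N r r' HN Hr Hr' Heq.
  destruct (cell_bounds N r HN Hr) as [A1 A2].
  destruct (cell_bounds N r' HN Hr') as [B1 B2].
  rewrite Heq in A1, A2.
  assert (HNpos : 1 <= INR N) by (apply (le_INR 1); auto).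
  assert (Habs : Rabs ((r - r') * INR N) <= 1) by (apply Rabs_le; nra).
  rewrite Rabs_mult, (Rabs_right (INR N)) in Habs by lra.
  apply (Rmult_le_reg_r (INR N)); [lra|]. rewrite Rinv_l by lra. lra.
Qed.

Lemma fold_max_le : forall (h : nat -> R) l w, 0 <= w -> (forall i, In i l -> h i <= w) ->
  fold_right Rmax 0 (map h l) <= w.
Proof.
  intros h l w Hw H; induction l; simpl; [lra|].
  apply Rmax_lub; [apply H; simpl; auto|apply IHl; intros; apply H; simpl; auto].
Qed.

Lemma nth_map_seq (g : nat -> nat) d i : (i < d)%nat -> nth i (map g (seq 0 d)) 0%nat = g i.
Proof.
  intros. rewrite nth_indep with (d' := g 0%nat) by (rewrite length_map, length_seq; lia).
  rewrite map_nth, seq_nth by lia. reflexivity.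
Qed.

Definition in_cube (d N : nat) (j : list nat) (y : point) : Prop :=
  in_unit_cube d y /\ cube_index d N y = j.

Lemma cube_dist : forall d N j x y, (1 <= N)%nat -> in_cube d N j x -> in_cube d N j y ->
  dist_inf d x y <= / INR N.
Proof.
  intros d N j x y HN [Hx Ex] [Hy Ey]. unfold dist_inf.
  assert (HNpos : 1 <= INR N) by (apply (le_INR 1); auto).
  apply fold_max_le. { left; apply Rinv_0_lt_compat; lra. }
  intros i Hi. apply in_seq in Hi.
  assert (Hc : cell N (x i) = cell N (y i)).
  { assert (E : cube_index d N x = cube_index d N y) by congruence.
    unfold cube_index in E.
    assert (E2 := f_equal (fun l => nth i l 0%nat) E). simpl in E2.
    rewrite !nth_map_seq in E2 by lia. exact E2. }
  apply cell_close; auto; [apply Hx|apply Hy]; lia.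
Qed.

Lemma cube_lip : forall d N L f j x y, (1 <= N)%nat -> admissible_f d L f ->
  in_cube d N j x -> in_cube d N j y -> Rabs (f y - f x) <= L * / INR N.
Proof.
  intros d N L f j x y HN [Hb Hl] Hx Hy.
  eapply Rle_trans. apply Hl; [apply Hy|apply Hx].
  assert (0 <= L). { destruct Hx as [Hx _]. specialize (Hb x Hx). lra. }
  apply Rmult_le_compat_l; auto. apply cube_dist with j; auto.
Qed.

Lemma cube_index_in : forall d N x, (1 <= N)%nat -> In (cube_index d N x) (all_idx d N).
Proof. intros. unfold cube_index. apply all_idx_in. intros; apply cell_lt; auto. Qed.

Lemma div_ge k c a : 0 < k -> c * k <= a -> c <= a / k.
Proof. intros. unfold Rdiv. apply Rmult_le_reg_r with k; auto.
  rewrite Rmult_assoc, Rinv_l by lra. lra. Qed.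

Lemma div_le k c a : 0 < k -> a <= c * k -> a / k <= c.
Proof. intros. unfold Rdiv. apply Rmult_le_reg_r with k; auto.
  rewrite Rmult_assoc, Rinv_l by lra. lra. Qed.

Definition Pfun (N : nat) (L eta W : R) : R :=
  L * Rmax 0 (ln ((W - 2 * L * / INR N) / (4 * L * eta)) / ln 2).

Lemma ln2_pos : 0 < ln 2.
Proof. pose proof ln_lt_2; lra. Qed.

Lemma Pfun_nonneg N L eta W : 0 < L -> 0 <= Pfun N L eta W.
Proof. intros. unfold Pfun. apply Rmult_le_pos; [lra|apply Rmax_l]. Qed.

Lemma Pfun_ge N L eta W : 0 < L -> 0 < eta -> / INR N <= eta -> 10 * L * eta <= W ->
  L <= Pfun N L eta W /\ 1 <= ln ((W - 2 * L * / INR N) / (4 * L * eta)) / ln 2.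
Proof.
  intros HL He Hw HW. unfold Pfun.
  assert (Hr : 2 <= (W - 2 * L * / INR N) / (4 * L * eta)).
  { apply div_ge. nra. nra. }
  assert (Hl : ln 2 <= ln ((W - 2 * L * / INR N) / (4 * L * eta))) by (apply ln_le'; lra).
  pose proof ln2_pos.
  assert (1 <= ln ((W - 2 * L * / INR N) / (4 * L * eta)) / ln 2).
  { apply div_ge; lra. }
  split; auto. rewrite Rmax_right by lra. nra.
Qed.

Lemma Pfun_dec N L eta W W' : 0 < L -> 0 < eta -> / INR N <= eta -> 10 * L * eta <= W ->
  W' <= W / 2 + L * / INR N -> Pfun N L eta W' <= Pfun N L eta W - L.
Proof.
  intros HL He Hw HW HW'.
  destruct (Pfun_ge N L eta W HL He Hw HW) as [_ H1].
  unfold Pfun in *. rewrite (Rmax_right 0 (ln ((W - _) / _) / _)) by lra.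
  set (k := 4 * L * eta) in *. assert (Hk : 0 < k) by (unfold k; nra). clearbody k.
  revert Hw HW' H1. generalize (/ INR N) as w. intros w Hw HW' H1.
  set (r := (W - 2 * L * w) / k). fold r in H1.
  set (r' := (W' - 2 * L * w) / k).
  assert (Hrr : r' <= r / 2).
  { unfold r'. apply div_le; auto. unfold r.
    replace ((W - 2 * L * w) / k / 2 * k) with ((W - 2 * L * w) / 2) by (field; lra).
    nra. }
  pose proof ln2_pos.
  assert (Hrpos : 0 < r).
  { destruct (Rlt_dec 0 r); auto. exfalso. assert (ln r = 0).
    { unfold ln. destruct (Rlt_dec 0 r); [contradiction|auto]. }
    rewrite H0 in H1. unfold Rdiv in H1. rewrite Rmult_0_l in H1. lra. }
  destruct (Rle_dec r' 1) as [Hle|Hgt].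
  - assert (ln r' <= 0) by (apply ln_nonpos; auto).
    rewrite Rmax_left. nra.
    apply div_le; lra.
  - assert (Hln : ln r' <= ln r - ln 2).
    { replace (ln r - ln 2) with (ln (r * / 2)).
      apply ln_le'; lra. rewrite ln_mult, ln_Rinv; lra. }
    assert (ln r' / ln 2 <= ln r / ln 2 - 1).
    { apply div_le; auto. replace ((ln r / ln 2 - 1) * ln 2) with (ln r - ln 2) by (field; lra). lra. }
    assert (Rmax 0 (ln r' / ln 2) <= ln r / ln 2 - 1) by (apply Rmax_lub; lra).
    nra.
Qed.

Definition indR (P : Prop) : R := if excluded_middle_informative P then 1 else 0.
Lemma indR_T (P : Prop) : P -> indR P = 1.
Proof. intros. unfold indR. destruct (excluded_middle_informative P); tauto. Qed.
Lemma indR_F (P : Prop) : ~ P -> indR P = 0.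
Proof. intros. unfold indR. destruct (excluded_middle_informative P); tauto. Qed.
Lemma indR_01 (P : Prop) : 0 <= indR P <= 1.
Proof. unfold indR. destruct (excluded_middle_informative P); lra. Qed.
Lemma indR_mono (P Q : Prop) : (P -> Q) -> indR P <= indR Q.
Proof. intros H. unfold indR. destruct (excluded_middle_informative P), (excluded_middle_informative Q); try lra. tauto. Qed.

Definition Ub d N L (f : point -> R) j s := exists y, in_cube d N j y /\ hi s + L * / INR N < f y.
Definition Lob d N (f : point -> R) j s := exists y, in_cube d N j y /\ f y < lo s.
Definition Invb d N (f : point -> R) j s := exists y, in_cube d N j y /\ (f y < lo s \/ hi s < f y).

Definition alpha tau S := (S + 1) / tau.
Definition Zc L tau S := L * (tau + 2 + 2 * S).
Definition Bc L tau S := L * (tau + 3 + 3 * S).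
Definition cround N L eta tau S := 10 * L * eta + L * / INR N + alpha tau S * L.

Definition Phi d N L eta tau S f j s :=
  alpha tau S * L * INR (cnt s) +
  (if Rlt_dec (hi s - lo s) (10 * L * eta) then
     indR (Ub d N L f j s) * (L * Rmax 0 (tau - INR (cnt s)) + L + S * L)
     + indR (Lob d N f j s) * (S * L + L)
   else Pfun N L eta (hi s - lo s) + indR (Invb d N f j s) * Zc L tau S).

Record Hyps d N L eta tau S f : Prop := {
  HN : (1 <= N)%nat;
  HL : 0 < L;
  Heta : 0 < eta;
  Hw : / INR N <= eta;
  Htau : 0 < tau;
  HS0 : 0 <= S;
  HS : Pfun N L eta L <= S * L;
  Hf : admissible_f d L f }.

Lemma w_pos d N L eta tau S f : Hyps d N L eta tau S f -> 0 < / INR N.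
Proof. intros H. apply Rinv_0_lt_compat. pose proof (le_INR 1 N (HN _ _ _ _ _ _ _ H)). simpl in H0. lra. Qed.

Lemma alpha_pos tau S : 0 < tau -> 0 <= S -> 0 < alpha tau S.
Proof. intros. unfold alpha. apply Rdiv_lt_0_compat; lra. Qed.

Lemma Phi_nonneg d N L eta tau S f j s : Hyps d N L eta tau S f -> 0 <= Phi d N L eta tau S f j s.
Proof.
  intros H. destruct H as [HN HL Heta Hw Htau HS0 HS Hf].
  pose proof (alpha_pos tau S Htau HS0). pose proof (pos_INR (cnt s)).
  unfold Phi. assert (0 <= alpha tau S * L * INR (cnt s)) by (apply Rmult_le_pos; nra).
  destruct (Rlt_dec _ _).
  - pose proof (indR_01 (Ub d N L f j s)). pose proof (indR_01 (Lob d N f j s)).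
    pose proof (Rmax_l 0 (tau - INR (cnt s))).
    assert (0 <= S * L) by nra.
    apply Rplus_le_le_0_compat; auto. apply Rplus_le_le_0_compat; apply Rmult_le_pos; try lra.
    assert (0 <= L * Rmax 0 (tau - INR (cnt s))) by (apply Rmult_le_pos; lra). lra.
  - pose proof (indR_01 (Invb d N f j s)). pose proof (Pfun_nonneg N L eta (hi s - lo s) HL).
    unfold Zc. assert (0 <= S * L) by nra.
    apply Rplus_le_le_0_compat; auto. apply Rplus_le_le_0_compat; auto. apply Rmult_le_pos; nra.
Qed.

Lemma Phi_reset d N L eta tau S f j : Hyps d N L eta tau S f ->
  Phi d N L eta tau S f j (mkC 0 L 0) <= S * L.
Proof.
  intros H. pose proof (w_pos _ _ _ _ _ _ _ H).
  destruct H as [HN HL Heta Hw Htau HS0 HS [Hb Hl]].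
  unfold Phi; simpl lo; simpl hi; simpl cnt.
  rewrite (indR_F (Ub _ _ _ _ _ _)), (indR_F (Lob _ _ _ _ _)), (indR_F (Invb _ _ _ _ _)).
  - simpl INR. rewrite Rminus_0_r. destruct (Rlt_dec _ _); nra.
  - intros [y [[Hy _] Hy2]]. specialize (Hb y Hy). simpl in Hy2. lra.
  - intros [y [[Hy _] Hy2]]. specialize (Hb y Hy). simpl in Hy2. lra.
  - intros [y [[Hy _] Hy2]]. specialize (Hb y Hy). simpl in Hy2. nra.
Qed.

Lemma pl_le v q : 0 <= q -> 0 <= v -> pricing_loss v q <= v.
Proof. intros. unfold pricing_loss. destruct (Rle_dec q v); lra. Qed.
Lemma pl_eq v q : q <= v -> pricing_loss v q = v - q.
Proof. intros. unfold pricing_loss. destruct (Rle_dec q v); lra. Qed.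
Lemma pl_gt v q : v < q -> pricing_loss v q = v.
Proof. intros. unfold pricing_loss. destruct (Rle_dec q v); lra. Qed.
Lemma sgn_T u : sgn u = true -> 0 < u.
Proof. unfold sgn. destruct (Rlt_dec 0 u); congruence. Qed.
Lemma sgn_F u : sgn u = false -> u <= 0.
Proof. unfold sgn. destruct (Rlt_dec 0 u); [congruence|lra]. Qed.

Lemma pricing_part_le d N L tau S f j s : 0 < L -> 0 < tau -> 0 <= S -> 0 <= L * / INR N ->
  indR (Ub d N L f j s) * (L * Rmax 0 (tau - INR (cnt s)) + L + S * L)
  + indR (Lob d N f j s) * (S * L + L) <= indR (Invb d N f j s) * Zc L tau S.
Proof.
  intros HL Ht HS Hw.
  pose proof (pos_INR (cnt s)).
  assert (Hm : 0 <= Rmax 0 (tau - INR (cnt s)) <= tau).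
  { split; [apply Rmax_l|apply Rmax_lub; lra]. }
  assert (0 <= L * Rmax 0 (tau - INR (cnt s)) <= L * tau) by (split; nra).
  destruct (classic (Invb d N f j s)) as [HI|HI].
  - rewrite (indR_T _ HI). pose proof (indR_01 (Ub d N L f j s)). pose proof (indR_01 (Lob d N f j s)).
    unfold Zc. assert (0 <= S * L) by nra.
    assert (indR (Ub d N L f j s) * (L * Rmax 0 (tau - INR (cnt s)) + L + S * L) <= L * Rmax 0 (tau - INR (cnt s)) + L + S * L).
    { rewrite <- (Rmult_1_l (L * _ + L + _)) at 2. apply Rmult_le_compat_r; lra. }
    assert (indR (Lob d N f j s) * (S * L + L) <= S * L + L).
    { rewrite <- (Rmult_1_l (S * L + L)) at 2. apply Rmult_le_compat_r; lra. }
    nra.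
  - assert (~ Lob d N f j s) by (intros [y [Hy Hy2]]; apply HI; exists y; auto).
    assert (~ Ub d N L f j s).
    { intros [y [Hy Hy2]]. apply HI. exists y. split; auto. right. lra. }
    rewrite (indR_F (Ub _ _ _ _ _ _)), (indR_F (Lob _ _ _ _ _)), (indR_F (Invb _ _ _ _ _)) by auto.
    lra.
Qed.

Lemma cround_nonneg N L eta tau S : 0 < L -> 0 < eta -> 0 < / INR N -> 0 < tau -> 0 <= S ->
  0 <= cround N L eta tau S.
Proof. intros. unfold cround. pose proof (alpha_pos tau S H2 H3). nra. Qed.

Lemma search_step d N L eta tau S f j a b c s' (x : point) (cor : bool) q :
  Hyps d N L eta tau S f -> in_cube d N j x -> 0 <= a -> 0 <= b ->
  ~ (b - a < 10 * L * eta) -> 0 <= q ->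
  hi s' - lo s' <= (b - a) / 2 + L * / INR N -> cnt s' = c ->
  (cor = false -> Invb d N f j s' -> Invb d N f j (mkC a b c)) ->
  pricing_loss (f x) q + Phi d N L eta tau S f j s'
  <= Phi d N L eta tau S f j (mkC a b c) + cround N L eta tau S + (if cor then Bc L tau S else 0).
Proof.
  intros H Hx Ha Hb Hph Hq HW Hc Hinv.
  pose proof (w_pos _ _ _ _ _ _ _ H) as Hwp.
  destruct H as [HN HL Heta Hw Htau HS0 HS [Hb0 Hl0]].
  assert (Hfx : 0 <= f x <= L) by (apply Hb0; apply Hx).
  assert (Hloss : pricing_loss (f x) q <= L) by (pose proof (pl_le (f x) q Hq); lra).
  assert (HWge : 10 * L * eta <= b - a) by lra.
  destruct (Pfun_ge N L eta (b - a) HL Heta Hw HWge) as [HP1 _].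
  assert (HP2 : Pfun N L eta (hi s' - lo s') <= Pfun N L eta (b - a) - L)
    by (apply Pfun_dec; auto).
  assert (Hc1 := cround_nonneg N L eta tau S HL Heta Hwp Htau HS0).
  assert (HZ : indR (Invb d N f j s') * Zc L tau S
               <= indR (Invb d N f j (mkC a b c)) * Zc L tau S + (if cor then Bc L tau S else 0)).
  { assert (0 <= Zc L tau S) by (unfold Zc; nra).
    destruct cor.
    - pose proof (indR_01 (Invb d N f j s')). pose proof (indR_01 (Invb d N f j (mkC a b c))).
      unfold Bc, Zc in *. nra.
    - pose proof (indR_mono _ _ (Hinv eq_refl)). nra. }
  pose proof (pricing_part_le d N L tau S f j s' HL Htau HS0 ltac:(nra)).
  unfold Phi at 1 2. rewrite Hc. simpl lo; simpl hi; simpl cnt.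
  destruct (Rlt_dec (b - a) (10 * L * eta)) as [Hlt|_]; [contradiction|].
  destruct (Rlt_dec (hi s' - lo s') (10 * L * eta)).
  - rewrite Hc in H. lra.
  - lra.
Qed.

Lemma Ub_c d N L f j a b c c' : Ub d N L f j (mkC a b c) = Ub d N L f j (mkC a b c').
Proof. reflexivity. Qed.
Lemma Lob_c d N f j a b c c' : Lob d N f j (mkC a b c) = Lob d N f j (mkC a b c').
Proof. reflexivity. Qed.

Lemma alpha_big tau S c : 0 < tau -> 0 <= S -> tau < INR c + 1 ->
  S + 1 <= alpha tau S * (INR c + 1).
Proof.
  intros. unfold alpha. unfold Rdiv.
  replace ((S + 1) * / tau * (INR c + 1)) with ((S + 1) * ((INR c + 1) / tau)) by (field; lra).
  assert (1 <= (INR c + 1) / tau) by (apply div_ge; lra). nra.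
Qed.

Lemma check_pass d N L eta tau S f j a b c x (cor : bool) :
  Hyps d N L eta tau S f -> in_cube d N j x -> 0 <= a -> 0 <= b ->
  b - a < 10 * L * eta -> tau < INR (Datatypes.S c) ->
  (cor = false -> ~ Ub d N L f j (mkC a b c)) ->
  pricing_loss (f x) b + Phi d N L eta tau S f j (mkC a b 0)
  <= Phi d N L eta tau S f j (mkC a b c) + cround N L eta tau S + (if cor then Bc L tau S else 0).
Proof.
  intros H Hx Ha Hb Hph Hck HU.
  pose proof (w_pos _ _ _ _ _ _ _ H) as Hwp.
  destruct H as [HN HL Heta Hw Htau HS0 HS [Hb0 Hl0]].
  assert (Hfx : 0 <= f x <= L) by (apply Hb0; apply Hx).
  assert (Hloss : pricing_loss (f x) b <= L) by (pose proof (pl_le (f x) b Hb); lra).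
  rewrite S_INR in Hck.
  pose proof (alpha_big tau S c Htau HS0 Hck).
  pose proof (alpha_pos tau S Htau HS0).
  unfold Phi; simpl lo; simpl hi; simpl cnt.
  destruct (Rlt_dec (b - a) (10 * L * eta)) as [_|]; [|contradiction].
  rewrite (Ub_c _ _ _ _ _ _ _ 0 c), (Lob_c _ _ _ _ _ _ 0 c).
  simpl INR. rewrite Rminus_0_r, (Rmax_right 0 tau) by lra.
  pose proof (pos_INR c).
  assert (Hm : 0 <= Rmax 0 (tau - INR c)) by apply Rmax_l.
  unfold cround.
  assert (0 <= alpha tau S * L) by nra.
  assert (0 <= alpha tau S * L * INR c) by nra.
  assert (0 <= L * / INR N) by nra.
  assert (0 <= 10 * L * eta) by nra.
  assert (L * (S + 1) <= alpha tau S * L * INR c + alpha tau S * L) by nra.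
  destruct cor.
  - pose proof (indR_01 (Ub d N L f j (mkC a b c))).
    assert (indR (Ub d N L f j (mkC a b c)) * (L * tau + L + S * L) <=
            indR (Ub d N L f j (mkC a b c)) * (L * Rmax 0 (tau - INR c) + L + S * L) + L * tau).
    { assert (0 <= L * Rmax 0 (tau - INR c)) by nra. pose proof (indR_01 (Ub d N L f j (mkC a b c))) as Hi. assert (0 <= L * tau) by nra. assert (indR (Ub d N L f j (mkC a b c)) * (L * tau) <= L * tau) by nra. assert (0 <= indR (Ub d N L f j (mkC a b c)) * (L * Rmax 0 (tau - INR c))) by nra. nra. }
    unfold Bc. assert (L + L * tau <= L * (tau + 3 + 3 * S)) by nra. lra.
  - rewrite (indR_F _ (HU eq_refl)). assert (0 <= S * L) by nra.
    pose proof (indR_01 (Lob d N f j (mkC a b c))). nra.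
Qed.

Lemma reset_case d N L eta tau S f j s x q :
  Hyps d N L eta tau S f -> in_cube d N j x -> 0 <= q ->
  L + S * L <= Phi d N L eta tau S f j s + (cround N L eta tau S) ->
  pricing_loss (f x) q + Phi d N L eta tau S f j (mkC 0 L 0)
  <= Phi d N L eta tau S f j s + cround N L eta tau S.
Proof.
  intros H Hx Hq Hbig.
  pose proof (Phi_reset d N L eta tau S f j H).
  destruct H as [HN HL Heta Hw Htau HS0 HS [Hb0 Hl0]].
  assert (Hfx : 0 <= f x <= L) by (apply Hb0; apply Hx).
  pose proof (pl_le (f x) q Hq). lra.
Qed.

Lemma pricing_stay d N L eta tau S f j a b c x (cor : bool) :
  Hyps d N L eta tau S f -> in_cube d N j x -> 0 <= a -> 0 <= b ->
  b - a < 10 * L * eta -> ~ tau < INR (Datatypes.S c) ->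
  (cor = false -> a <= f x) ->
  pricing_loss (f x) a + Phi d N L eta tau S f j (mkC a b (Datatypes.S c))
  <= Phi d N L eta tau S f j (mkC a b c) + cround N L eta tau S + (if cor then Bc L tau S else 0).
Proof.
  intros H Hx Ha Hb Hph Hck Hcor.
  pose proof (w_pos _ _ _ _ _ _ _ H) as Hwp.
  destruct H as [HN HL Heta Hw Htau HS0 HS [Hb0 Hl0]].
  assert (Hfx : 0 <= f x <= L) by (apply Hb0; apply Hx).
  rewrite S_INR in Hck.
  pose proof (alpha_pos tau S Htau HS0).
  unfold Phi; simpl lo; simpl hi; simpl cnt.
  destruct (Rlt_dec (b - a) (10 * L * eta)) as [_|]; [|contradiction].
  rewrite (Ub_c _ _ _ _ _ _ _ (Datatypes.S c) c), (Lob_c _ _ _ _ _ _ (Datatypes.S c) c).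
  rewrite S_INR.
  pose proof (pos_INR c).
  rewrite (Rmax_right 0 (tau - (INR c + 1))) by lra.
  rewrite (Rmax_right 0 (tau - INR c)) by lra.
  unfold cround.
  assert (0 <= alpha tau S * L) by nra.
  assert (0 <= L * / INR N) by nra.
  assert (Bc L tau S >= L) by (unfold Bc; nra).
  pose proof (indR_01 (Ub d N L f j (mkC a b c))) as HU01.
  set (u := indR (Ub d N L f j (mkC a b c))) in *.
  set (lo' := indR (Lob d N f j (mkC a b c))) in *.
  replace (alpha tau S * L * (INR c + 1) + (u * (L * (tau - (INR c + 1)) + L + S * L) + lo' * (S * L + L)))
    with (alpha tau S * L * INR c + (u * (L * (tau - INR c) + L + S * L) + lo' * (S * L + L)) + alpha tau S * L - u * L) by ring.
  destruct (Rle_dec a (f x)) as [Hle|Hgt].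
  - rewrite pl_eq by auto.
    destruct (classic (Ub d N L f j (mkC a b c))) as [HU|HU].
    + assert (u = 1) by (unfold u; apply indR_T; auto).
      destruct cor; nra.
    + assert (u = 0) by (unfold u; apply indR_F; auto).
      assert (f x <= b + L * / INR N).
      { destruct (Rle_dec (f x) (b + L * / INR N)); auto. exfalso. apply HU. exists x. split; auto. simpl. lra. }
      destruct cor; nra.
  - rewrite pl_gt by lra. destruct cor; [|specialize (Hcor eq_refl); lra].
    nra.
Qed.

Lemma Rabs_le_inv a b : Rabs a <= b -> - b <= a <= b.
Proof. unfold Rabs. destruct (Rcase_abs a); intros; lra. Qed.

Lemma reset_case' d N L eta tau S f j s x q e :
  Hyps d N L eta tau S f -> in_cube d N j x -> 0 <= q ->
  L + S * L <= Phi d N L eta tau S f j s + cround N L eta tau S + e ->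
  pricing_loss (f x) q + Phi d N L eta tau S f j (mkC 0 L 0)
  <= Phi d N L eta tau S f j s + cround N L eta tau S + e.
Proof.
  intros H Hx Hq Hbig.
  pose proof (Phi_reset d N L eta tau S f j H).
  destruct H as [HN HL Heta Hw Htau HS0 HS [Hb0 Hl0]].
  assert (Hfx : 0 <= f x <= L) by (apply Hb0; apply Hx).
  pose proof (pl_le (f x) q Hq). lra.
Qed.

Lemma Bc_ge L tau S : 0 < L -> 0 < tau -> 0 <= S -> L + S * L <= Bc L tau S.
Proof. intros. unfold Bc. nra. Qed.

Lemma Phi_ge_cnt d N L eta tau S f j s : Hyps d N L eta tau S f ->
  alpha tau S * L * INR (cnt s) <= Phi d N L eta tau S f j s.
Proof.
  intros H. pose proof (Phi_nonneg d N L eta tau S f j s H).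
  (* Phi = alpha*L*cnt + rest, rest >= 0 *)
  destruct H as [HN HL Heta Hw Htau HS0 HS Hf].
  unfold Phi in *. destruct (Rlt_dec _ _).
  - pose proof (indR_01 (Ub d N L f j s)). pose proof (indR_01 (Lob d N f j s)).
    pose proof (Rmax_l 0 (tau - INR (cnt s))).
    assert (0 <= L * Rmax 0 (tau - INR (cnt s))) by nra.
    assert (0 <= S * L) by nra.
    assert (0 <= indR (Ub d N L f j s) * (L * Rmax 0 (tau - INR (cnt s)) + L + S * L)) by nra.
    assert (0 <= indR (Lob d N f j s) * (S * L + L)) by nra. lra.
  - pose proof (indR_01 (Invb d N f j s)). pose proof (Pfun_nonneg N L eta (hi s - lo s) HL).
    assert (0 <= Zc L tau S) by (unfold Zc; nra).
    assert (0 <= indR (Invb d N f j s) * Zc L tau S) by nra. lra.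
Qed.

Lemma round_step d N L eta tau S f j s x (cor : bool) :
  Hyps d N L eta tau S f -> in_cube d N j x -> 0 <= lo s -> 0 <= hi s ->
  let r := alg3_round L eta tau (/ INR N) s in
  let sg := xorb (sgn (fst r - f x)) cor in
  (pricing_loss (f x) (fst r) + Phi d N L eta tau S f j (snd r sg)
     <= Phi d N L eta tau S f j s + cround N L eta tau S + (if cor then Bc L tau S else 0))
  /\ 0 <= lo (snd r sg) /\ 0 <= hi (snd r sg).
Proof.
  intros H Hx Ha Hb r sg.
  pose proof (w_pos _ _ _ _ _ _ _ H) as Hwp.
  assert (HH := H).
  destruct HH as [HN HL Heta Hw Htau HS0 HS [Hb0 Hl0]].
  assert (Hfx : 0 <= f x <= L) by (apply Hb0; apply Hx).
  pose proof (Bc_ge L tau S HL Htau HS0) as HBc.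
  pose proof (alpha_pos tau S Htau HS0) as Hal.
  assert (Hlip : forall y, in_cube d N j y -> Rabs (f y - f x) <= L * / INR N)
    by (intros; eapply cube_lip; eauto; split; eauto).
  destruct s as [a b c]; simpl in Ha, Hb.
  unfold sg, r, alg3_round; clear sg r; cbn [lo hi cnt].
  destruct (Rlt_dec (b - a) (10 * L * eta)) as [Hph|Hph].
  - destruct (Rlt_dec tau (INR (Datatypes.S c))) as [Hck|Hck]; cbn [fst snd].
    +
      destruct (sgn (b - f x)) eqn:Es; destruct cor; simpl xorb.
      *
        split; [|simpl; split; lra].
        apply reset_case'; auto.
        pose proof (Phi_ge_cnt d N L eta tau S f j (mkC a b c) H). simpl cnt in H0.
        rewrite S_INR in Hck. pose proof (alpha_big tau S c Htau HS0 Hck).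
        assert (L * (S + 1) <= L * (alpha tau S * (INR c + 1))) by (apply Rmult_le_compat_l; lra).
        unfold cround. assert (0 <= L * / INR N) by nra. assert (0 <= 10 * L * eta) by nra.
        assert (0 <= Bc L tau S) by nra. nra.
      * split; [|simpl; split; lra]. apply check_pass with (cor := false); auto.
        intros _ [y [Hy Hy2]]. apply sgn_T in Es. specialize (Hlip y Hy).
        apply Rabs_le_inv in Hlip. cbn [hi] in Hy2. lra.
      * split; [|simpl; split; lra]. apply check_pass with (cor := true); auto. discriminate.
      * split; [|simpl; split; lra].
        apply reset_case'; auto.
        pose proof (Phi_ge_cnt d N L eta tau S f j (mkC a b c) H). simpl cnt in H0.
        rewrite S_INR in Hck. pose proof (alpha_big tau S c Htau HS0 Hck).
        assert (L * (S + 1) <= L * (alpha tau S * (INR c + 1))) by (apply Rmult_le_compat_l; lra).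
        unfold cround. assert (0 <= L * / INR N) by nra. assert (0 <= 10 * L * eta) by nra.
        nra.
    +
      destruct (sgn (a - f x)) eqn:Es; destruct cor; simpl xorb.
      * split; [|simpl; split; lra]. apply pricing_stay with (cor := true); auto. discriminate.
      * split; [|simpl; split; lra].
        apply reset_case'; auto.
        apply sgn_T in Es.
        assert (HLo : Lob d N f j (mkC a b c)) by (exists x; split; auto; simpl; lra).
        unfold Phi at 1; simpl lo; simpl hi; simpl cnt.
        destruct (Rlt_dec (b - a) (10 * L * eta)) as [_|]; [|contradiction].
        rewrite (indR_T _ HLo).
        pose proof (indR_01 (Ub d N L f j (mkC a b c))).
        pose proof (Rmax_l 0 (tau - INR c)). pose proof (pos_INR c).
        assert (0 <= L * Rmax 0 (tau - INR c)) by nra.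
        assert (0 <= S * L) by nra.
        assert (0 <= indR (Ub d N L f j (mkC a b c)) * (L * Rmax 0 (tau - INR c) + L + S * L)) by nra.
        assert (0 <= alpha tau S * L * INR c) by (apply Rmult_le_pos; [apply Rmult_le_pos|]; lra).
        pose proof (cround_nonneg N L eta tau S HL Heta Hwp Htau HS0). lra.
      * split; [|simpl; split; lra].
        apply reset_case'; auto.
        pose proof (Phi_nonneg d N L eta tau S f j (mkC a b c) H).
        pose proof (cround_nonneg N L eta tau S HL Heta Hwp Htau HS0). lra.
      * split; [|simpl; split; lra]. apply pricing_stay with (cor := false); auto.
        intros _. apply sgn_F in Es. lra.
  -
    cbn [fst snd].
    set (q := (a + b) / 2).
    assert (Hq : 0 <= q) by (unfold q; lra).
    destruct (sgn (q - f x)) eqn:Es; destruct cor; simpl xorb.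
    +
      split; [|simpl; split; [apply Rle_trans with a; [lra|apply Rmax_l]|lra]].
      apply search_step with (cor := true); auto.
      * simpl. pose proof (Rmax_r a (q - L * / INR N)). unfold q in *. lra.
      * discriminate.
    +
      apply sgn_T in Es.
      assert (Hmin : Rmin b (q + L * / INR N) <= b /\ Rmin b (q + L * / INR N) <= q + L * / INR N)
        by (split; [apply Rmin_l|apply Rmin_r]).
      split; [|simpl; split; [apply Rle_trans with a; [lra|apply Rmax_l]|]].
      * apply search_step with (cor := false); auto.
        -- simpl. rewrite Rmax_left by lra. unfold q in *. lra.
        -- intros _ [y [Hy Hy2]]. exists y. split; auto. simpl in Hy2 |- *.
           rewrite Rmax_left in Hy2 by lra.
           destruct Hy2 as [Hy2|Hy2]; [left; lra|].
           specialize (Hlip y Hy). apply Rabs_le_inv in Hlip.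
           unfold Rmin in Hy2. destruct (Rle_dec b (q + L * / INR N)); [right; lra|lra].
      * unfold Rmin. destruct (Rle_dec b (q + L * / INR N)); [lra|].
        assert (0 <= L * / INR N) by nra. lra.
    +
      assert (Hmin : Rmin b (q + L * / INR N) <= b /\ Rmin b (q + L * / INR N) <= q + L * / INR N)
        by (split; [apply Rmin_l|apply Rmin_r]).
      split; [|simpl; split; [apply Rle_trans with a; [lra|apply Rmax_l]|]].
      * apply search_step with (cor := true); auto.
        -- simpl. rewrite Rmax_left by lra. unfold q in *. lra.
        -- discriminate.
      * unfold Rmin. destruct (Rle_dec b (q + L * / INR N)); [lra|].
        assert (0 <= L * / INR N) by nra. lra.
    +
      apply sgn_F in Es.
      split; [|simpl; split; [apply Rle_trans with a; [lra|apply Rmax_l]|lra]].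
      apply search_step with (cor := false); auto.
      * simpl. pose proof (Rmax_r a (q - L * / INR N)). unfold q in *. lra.
      * intros _ [y [Hy Hy2]]. exists y. split; auto. simpl in Hy2 |- *.
        specialize (Hlip y Hy). apply Rabs_le_inv in Hlip.
        destruct Hy2 as [Hy2|Hy2]; [|right; lra].
        unfold Rmax in Hy2. destruct (Rle_dec a (q - L * / INR N)); [lra|left; lra].
Qed.

Definition Psi d N L eta tau S f (cubes : list nat -> cstate) :=
  sumR (map (fun j => Phi d N L eta tau S f j (cubes j)) (all_idx d N)).

Lemma game_inv d N L eta tau S f advx advc :
  Hyps d N L eta tau S f -> (forall h, in_unit_cube d (advx h)) -> forall n,
  let g := run_game d N L eta tau f advx advc n in
  (forall j, 0 <= lo (gcubes g j) /\ 0 <= hi (gcubes g j)) /\ (gncorr g <= n)%nat /\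
  gloss g + Psi d N L eta tau S f (gcubes g)
    <= Psi d N L eta tau S f (fun _ => mkC 0 L 0) + INR n * cround N L eta tau S
       + INR (gncorr g) * Bc L tau S.
Proof.
  intros H Hadv n. pose proof (HL _ _ _ _ _ _ _ H).
  induction n as [|m IH]; intros g.
  - subst g. simpl. split; [intros; lra|]. split; [lia|]. lra.
  - subst g. cbn [run_game].
    set (g := run_game d N L eta tau f advx advc m) in *.
    destruct IH as [Hpos [Hc Hl]].
    set (x := advx (ghist g)).
    set (j := cube_index d N x).
    set (s := gcubes g j).
    set (r := alg3_round L eta tau (/ INR N) s).
    set (cor := advc (ghist g) x (fst r)).
    assert (Hx : in_cube d N j x) by (split; [apply Hadv|reflexivity]).
    destruct (round_step d N L eta tau S f j s x cor H Hx (proj1 (Hpos j)) (proj2 (Hpos j)))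
      as [Hstep [Hlo Hhi]].
    fold r in Hstep, Hlo, Hhi.
    cbn [gcubes gncorr gloss].
    split; [|split].
    + intros j'. destruct (list_eq_dec Nat.eq_dec j' j); auto.
    + destruct cor; lia.
    + unfold Psi in *.
      rewrite (sum_update (fun j' s => Phi d N L eta tau S f j' s) (gcubes g) _ j (all_idx d N)).
      2: apply all_idx_nodup.
      2: apply cube_index_in; apply (HN _ _ _ _ _ _ _ H).
      rewrite plus_INR, S_INR.
      fold s.
      assert (INR (if cor then 1%nat else 0%nat) * Bc L tau S = if cor then Bc L tau S else 0)
        by (destruct cor; simpl; ring).
      nra.
Qed.

Lemma loss_bound d N L eta tau S f advx advc n :
  Hyps d N L eta tau S f -> (forall h, in_unit_cube d (advx h)) ->
  let g := run_game d N L eta tau f advx advc n in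
  gloss g <= INR (N ^ d) * (S * L) + INR n * cround N L eta tau S + INR (gncorr g) * Bc L tau S.
Proof.
  intros H Hadv g.
  destruct (game_inv d N L eta tau S f advx advc H Hadv n) as [_ [_ Hl]]. fold g in Hl.
  assert (0 <= Psi d N L eta tau S f (gcubes g)).
  { apply sumR_nonneg. intros; apply Phi_nonneg; auto. }
  assert (Psi d N L eta tau S f (fun _ => mkC 0 L 0) <= INR (N ^ d) * (S * L)).
  { unfold Psi. rewrite <- all_idx_length. apply sumR_le_const. intros; apply Phi_reset; auto. }
  lra.
Qed.

Lemma Rpower_pos x y : 0 < Rpower x y.
Proof. unfold Rpower. apply exp_pos. Qed.

Lemma ln_le_gen x T : 1 <= T -> x <= T -> ln x <= ln T.
Proof.
  intros. destruct (Rlt_dec 0 x). apply ln_le'; auto.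
  replace (ln x) with 0. rewrite <- ln_1. apply ln_le'; lra.
  unfold ln. destruct (Rlt_dec 0 x); [contradiction|auto].
Qed.

Theorem corollary15 :
  forall d : nat, (1 <= d)%nat ->
  exists (K : R) (k : nat),
  forall (L : R) (T C : nat),
    0 < L -> (2 <= T)%nat -> (1 <= C)%nat ->
    forall (f : point -> R), admissible_f d L f ->
    forall (advx : history -> point) (advc : history -> point -> R -> bool),
      (forall h, in_unit_cube d (advx h)) ->
      let g := run_game d (N_of (eta0_of d T)) L (eta0_of d T) (tau0_of T C)
                 f advx advc T in
      (gncorr g <= C)%nat ->
      gloss g <= K * L * (ln (INR T)) ^ k *
                 (Rpower (INR T) (INR d / INR (d + 1)) + sqrt (INR T * INR C)).
Proof.
  intros d Hd. exists (2 * 2 ^ d + 22), 1%nat.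
  intros L T C HL HT HC f Hf advx advc Hadv g Hcorr.
  assert (HTr : 2 <= INR T) by (apply (le_INR 2 T) in HT; simpl in HT; lra).
  assert (HCr : 1 <= INR C) by (apply (le_INR 1 C) in HC; simpl in HC; lra).
  set (Tr := INR T) in *. set (Cr := INR C) in *.
  set (eta := eta0_of d T) in *. set (tau := tau0_of T C) in *.
  set (N := N_of eta) in *. set (S := ln Tr / ln 2).
  set (B := Rpower Tr (/ INR (d + 1))).
  assert (Hd1 : 1 <= INR (d + 1)) by (apply (le_INR 1); lia).
  assert (HdE : INR (d + 1) = INR d + 1) by (rewrite plus_INR; simpl; ring).
  assert (HB1 : 1 <= B).
  { unfold B. rewrite <- (Rpower_O Tr) by lra. apply Rle_Rpower; [lra|].
    left; apply Rinv_0_lt_compat; lra. }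
  assert (HBT : B <= Tr).
  { unfold B. rewrite <- (Rpower_1 Tr) at 2 by lra. apply Rle_Rpower; [lra|].
    rewrite <- Rinv_1. apply Rinv_le_contravar; lra. }
  assert (Heta : eta = / B) by (unfold eta, eta0_of, B; rewrite Rpower_Ropp; reflexivity).
  assert (Hetapos : 0 < eta) by (rewrite Heta; apply Rinv_0_lt_compat; lra).
  assert (HBeta : B * eta = 1) by (rewrite Heta; field; lra).
  destruct (archimed B) as [Hup1 Hup2].
  assert (Hupz : (0 <= up B)%Z).
  { assert (0 < IZR (up B)) by lra. apply lt_IZR in H. lia. }
  assert (HNr : INR N = IZR (up B)).
  { unfold N, N_of. rewrite Heta, Rinv_inv. rewrite INR_IZR_INZ, Z2Nat.id; auto. }
  assert (HN1 : (1 <= N)%nat).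
  { assert (INR 0 < INR N) by (simpl; lra). apply INR_lt in H. lia. }
  assert (Hw : / INR N <= eta).
  { rewrite Heta. left. apply Rinv_lt_contravar; nra. }
  assert (HNle : INR N <= 2 * B) by lra.
  assert (Htau : 0 < tau).
  { unfold tau, tau0_of. fold Tr Cr. apply sqrt_lt_R0. apply Rdiv_lt_0_compat; lra. }
  pose proof ln2_pos as Hln2. pose proof ln_lt_2 as Hln2'.
  assert (HlnT : ln 2 <= ln Tr) by (apply ln_le'; lra).
  assert (HS0 : 0 <= S) by (unfold S; apply div_ge; lra).
  assert (Hwpos : 0 < / INR N) by (apply Rinv_0_lt_compat; lra).
  assert (HS : Pfun N L eta L <= S * L).
  { unfold Pfun. rewrite Rmult_comm. apply Rmult_le_compat_r; [lra|].
    apply Rmax_lub; auto.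
    assert (Harg : (L - 2 * L * / INR N) / (4 * L * eta) <= Tr).
    { apply div_le; [nra|]. assert (Tr * eta >= B * eta) by nra.
      assert (0 <= L * / INR N) by nra.
      replace (Tr * (4 * L * eta)) with (4 * L * (Tr * eta)) by ring.
      assert (4 * L * (Tr * eta) >= 4 * L * 1) by (apply Rmult_ge_compat_l; lra). lra. }
    assert (ln ((L - 2 * L * / INR N) / (4 * L * eta)) <= ln Tr) by (apply ln_le_gen; lra).
    unfold S, Rdiv. apply Rmult_le_compat_r; [left; apply Rinv_0_lt_compat; lra|]. exact H. }
  assert (Hyp : Hyps d N L eta tau S f) by (constructor; auto).
  pose proof (loss_bound d N L eta tau S f advx advc T Hyp Hadv) as Hlb.
  fold g in Hlb.
  destruct (game_inv d N L eta tau S f advx advc Hyp Hadv T) as [_ [HncT _]]. fold g in HncT.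
  set (nc := INR (gncorr g)) in *.
  assert (HncC : nc <= Cr) by (apply le_INR; auto).
  assert (HncT' : nc <= Tr) by (apply le_INR; auto).
  assert (Hnc0 : 0 <= nc) by apply pos_INR.
  set (A := Rpower Tr (INR d / INR (d + 1))).
  set (Q := sqrt (Tr * Cr)).
  assert (F1 : Tr * eta = A).
  { unfold eta, eta0_of, A. fold Tr. rewrite <- (Rpower_1 Tr) at 1 by lra.
    rewrite <- Rpower_plus. f_equal. rewrite HdE. field. lra. }
  assert (F2 : INR (N ^ d) <= 2 ^ d * A).
  { rewrite pow_INR. apply Rle_trans with ((2 * B) ^ d).
    - apply pow_incr; split; [apply pos_INR|auto].
    - rewrite Rpow_mult_distr. apply Rmult_le_compat_l; [apply pow_le; lra|].
      unfold B, A. rewrite <- Rpower_pow by (apply Rpower_pos). rewrite Rpower_mult.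
      right. f_equal. field. lra. }
  assert (HTC : 0 <= Tr / Cr) by (left; apply Rdiv_lt_0_compat; lra).
  assert (F3 : tau * Q = Tr).
  { unfold tau, tau0_of, Q. fold Tr Cr. rewrite <- sqrt_mult_alt by auto.
    replace (Tr / Cr * (Tr * Cr)) with (Tr * Tr) by (field; lra). apply sqrt_square; lra. }
  assert (F4 : Cr * tau = Q).
  { unfold tau, tau0_of, Q. fold Tr Cr. rewrite <- (sqrt_square Cr) at 1 by lra.
    rewrite <- sqrt_mult_alt by nra.
    f_equal. field. lra. }
  assert (F5 : nc <= Q).
  { unfold Q. rewrite <- (sqrt_square nc) by auto. apply sqrt_le_1_alt.
    apply Rmult_le_compat; lra. }
  assert (HQ0 : 0 <= Q) by apply sqrt_pos.
  assert (HA0 : 0 <= A) by (left; apply Rpower_pos).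
  assert (F6 : S <= 2 * ln Tr) by (unfold S; apply div_le; nra).
  assert (F7 : 1 <= 2 * ln Tr) by lra.
  unfold cround, Bc, alpha in Hlb.
  assert (Halpha : Tr * ((S + 1) / tau) = (S + 1) * Q).
  { rewrite <- F3. field. lra. }
  assert (Hwl : Tr * / INR N <= A) by (rewrite <- F1; apply Rmult_le_compat_l; lra).
  assert (Hnt : nc * tau <= Q) by (rewrite <- F4; apply Rmult_le_compat_r; lra).
  assert (E1 : gloss g <= L * (INR (N ^ d) * S + 10 * (Tr * eta) + Tr * / INR N
                 + Tr * ((S + 1) / tau) + nc * tau + nc * (3 + 3 * S))).
  { eapply Rle_trans; [exact Hlb|]. right. unfold Tr, nc. ring. }
  rewrite F1, Halpha in E1.
  assert (E2 : INR (N ^ d) * S + 10 * A + Tr * / INR N + (S + 1) * Q + nc * tau + nc * (3 + 3 * S)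
               <= 2 ^ d * A * S + 11 * A + (5 + 4 * S) * Q).
  { assert (INR (N ^ d) * S <= 2 ^ d * A * S) by (apply Rmult_le_compat_r; auto).
    assert (nc * (3 + 3 * S) <= Q * (3 + 3 * S)) by (apply Rmult_le_compat_r; lra).
    lra. }
  assert (Hpd : 0 <= 2 ^ d) by (apply pow_le; lra).
  assert (E3 : 2 ^ d * A * S + 11 * A + (5 + 4 * S) * Q
               <= (2 * 2 ^ d + 22) * ln Tr * (A + Q)).
  { assert (2 ^ d * A * S <= 2 ^ d * A * (2 * ln Tr)) by (apply Rmult_le_compat_l; nra).
    assert (11 * A <= 11 * A * (2 * ln Tr)) by nra.
    assert ((5 + 4 * S) * Q <= (18 * ln Tr) * Q) by (apply Rmult_le_compat_r; lra).
    assert (0 <= (2 * 2 ^ d + 4) * ln Tr * Q) by (apply Rmult_le_pos; [apply Rmult_le_pos|]; lra).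
    assert (0 <= 2 * 2 ^ d * ln Tr * A) by (apply Rmult_le_pos; [apply Rmult_le_pos|]; lra).
    nra. }
  simpl pow. rewrite Rmult_1_r.
  eapply Rle_trans; [exact E1|].
  replace ((2 * 2 ^ d + 22) * L * ln Tr * (A + Q)) with (L * ((2 * 2 ^ d + 22) * ln Tr * (A + Q))) by ring.
  apply Rmult_le_compat_l; lra.
Qed.
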